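(* Let $D$ be a Dedekind domain with quotient field $K$, let $I$ be a finite non-empty index set, let $f_i\in D[x]$ be irreducible in $K[x]$ for each $i\in I$, and let $c$ be a non-unit of $D$ with $\mathsf{d}\bigl(\prod_{i\in I}f_i\bigr)=cD$. Put $f=\frac{1}{c}\prod_{i\in I}f_i\in\operatorname{Int}(D)$, and let $\mathcal{P}$ be the finite set of maximal ideals of $D$ containing $c$. If $f=g_1\cdots g_m$ with $g_1,\ldots,g_m$ (not necessarily irreducible) non-units of $\operatorname{Int}(D)$, then each $g_j$ is of the form \[g_j=a_j\prod_{i\in I_j}f_i,\] where $\emptyset\neq I_j\subseteq I$, $a_j\in K$, $I=I_1\uplus\cdots\uplus I_m$, $a_1\cdots a_m=c^{-1}$, and (1) $\mathsf{v}_P(a_j)\le 0$ for all maximal ideals $P$ of $D$ and all $1\le j\le m$; and (2) $\mathsf{v}_P(a_j)=0$ for all maximal ideals $P\notin\mathcal{P}$ and all $1\le j\le m$.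
   Context: $\operatorname{Int}(D)=\{h\in K[x]\mid h(D)\subseteq D\}$. For $g\in D[x]$ (or $g\in\operatorname{Int}(D)$), the fixed divisor $\mathsf{d}(g)$ is the ideal of $D$ generated by $\{g(a)\mid a\in D\}$. For a maximal ideal $P$, $\mathsf{v}_P$ is the $P$-adic valuation on $K$. *)

(* Defs.v *)
From HB Require Import structures.
From mathcomp Require Import all_boot all_order all_algebra.
From Stdlib Require Import ClassicalEpsilon.
Set Implicit Arguments. Unset Strict Implicit. Unset Printing Implicit Defensive.
Import Order.TTheory GRing.Theory Num.Theory.
Local Open Scope ring_scope.

Section Defs.
Variable D : idomainType.
Local Notation K := {fraction D}.

Definition tof (a : D) : {fraction D} := @FracField.tofrac D a.

Definition is_ideal (J : D -> Prop) : Prop :=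
  J 0 /\ (forall x y, J x -> J y -> J (x + y)) /\ (forall r x, J x -> J (r * x)).

Definition is_prime_ideal (J : D -> Prop) : Prop :=
  is_ideal J /\ ~ J 1 /\ (forall a b, J (a * b) -> J a \/ J b).

Definition is_maximal_ideal (J : D -> Prop) : Prop :=
  is_ideal J /\ ~ J 1 /\
  (forall J', is_ideal J' -> (forall x, J x -> J' x) ->
     (forall x, J' x) \/ (forall x, J' x <-> J x)).

Definition gen_ideal (S : D -> Prop) (x : D) : Prop :=
  exists n (r s : 'I_n -> D), (forall k, S (s k)) /\ x = \sum_(k < n) r k * s k.

Definition ideal_mul (I J : D -> Prop) (x : D) : Prop :=
  exists n (r s : 'I_n -> D), (forall k, I (r k) /\ J (s k)) /\
                              x = \sum_(k < n) r k * s k.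

Fixpoint ideal_pow (P : D -> Prop) (n : nat) : D -> Prop :=
  match n with
  | 0 => fun _ => True
  | n'.+1 => ideal_mul P (ideal_pow P n')
  end.

Definition noetherian : Prop :=
  forall J, is_ideal J -> exists s : seq D, forall x, J x <-> gen_ideal (fun y => y \in s) x.

Definition integrally_closed : Prop :=
  forall x : K, (exists p : {poly D}, p \is monic /\ root (map_poly tof p) x) ->
    exists a : D, x = tof a.

Definition dedekind : Prop :=
  noetherian /\ integrally_closed /\
  (forall P, is_prime_ideal P -> (exists x, P x /\ x != 0) -> is_maximal_ideal P).

(* Int(D) = { h in K[x] | h(D) ⊆ D }. *)
Definition intval (h : {poly K}) : Prop :=
  forall a : D, exists b : D, h.[tof a] = tof b.

Definition intval_unit (h : {poly K}) : Prop :=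
  intval h /\ exists h', intval h' /\ h * h' = 1.

Definition fixdiv (g : {poly D}) : D -> Prop :=
  gen_ideal (fun y => exists a, y = g.[a]).

Definition principal (c : D) : D -> Prop := fun x => exists r, x = r * c.

Definition ordP (P : D -> Prop) (a : D) : nat :=
  epsilon (inhabits 0%N) (fun n => ideal_pow P n a /\ ~ ideal_pow P n.+1 a).

Definition vP (P : D -> Prop) (x : K) : int :=
  epsilon (inhabits 0%Z) (fun z => exists a b : D, b != 0 /\ x = tof a / tof b /\
                                   z = (ordP P a)%:Z - (ordP P b)%:Z).
End Defs.

(* Main.v *)
Require Import Defs.
From HB Require Import structures.
From mathcomp Require Import all_boot all_order all_algebra zify.
From Stdlib Require Import ClassicalEpsilon Classical.
Import Order.TTheory GRing.Theory Num.Theory.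
Set Implicit Arguments. Unset Strict Implicit. Unset Printing Implicit Defensive.
Local Open Scope ring_scope.

HB.instance Definition _ (D : idomainType) :=
  GRing.RMorphism.copy (@tof D) (@FracField.tofrac D).

Section Alg.
Variable D : idomainType.
Local Notation K := {fraction D}.
Implicit Types (P J Q : D -> Prop).

Definition sumform (R : D -> D -> Prop) (x : D) : Prop :=
  exists n (r s : 'I_n -> D), (forall k, R (r k) (s k)) /\ x = \sum_(k < n) r k * s k.

Lemma sumform0 R : sumform R 0.
Proof. by exists 0%N, (fun _ => 0), (fun _ => 0); split=> [[]|]; rewrite ?big_ord0. Qed.

Lemma sumform1 (R : D -> D -> Prop) r s : R r s -> sumform R (r * s).
Proof. by move=> H; exists 1%N, (fun _ => r), (fun _ => s); split=> // ; rewrite big_ord1. Qed.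

Lemma sumformD R x y : sumform R x -> sumform R y -> sumform R (x + y).
Proof.
move=> [n1 [r1 [s1 [H1 ->]]]] [n2 [r2 [s2 [H2 ->]]]].
exists (n1 + n2)%N, (fun k => match split k with inl a => r1 a | inr b => r2 b end),
  (fun k => match split k with inl a => s1 a | inr b => s2 b end).
split; first by move=> k; case: (split k).
rewrite big_split_ord /=; congr (_ + _); apply: eq_bigr => i _.
  by rewrite (unsplitK (inl _ i : 'I_n1 + 'I_n2)).
by rewrite (unsplitK (inr _ i : 'I_n1 + 'I_n2)).
Qed.

Lemma ideal_mulE I J x : ideal_mul I J x <-> sumform (fun r s => I r /\ J s) x.
Proof. by []. Qed.

Lemma ideal_sum J n (r s : 'I_n -> D) : is_ideal J -> (forall k, J (r k * s k)) ->
  J (\sum_(k < n) r k * s k).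
Proof.
move=> [J0 [JD JM]] H; elim/big_ind: _ => //.
Qed.

Lemma ideal_mulr J r x : is_ideal J -> J x -> J (x * r).
Proof. by move=> [_ [_ JM]] Jx; rewrite mulrC; apply: JM. Qed.

Lemma ideal_mul_ideal I J : is_ideal J -> is_ideal (ideal_mul I J).
Proof.
move=> HJ; split; first exact: (@sumform0 (fun r s => I r /\ J s)).
split; first by move=> x y; apply: (@sumformD (fun r s => I r /\ J s)).
move=> r x [n [a [b [H ->]]]]; rewrite big_distrr /=.
exists n, a, (fun k => r * b k); split.
  by move=> k; case: (H k) => Ha Hb; split => //; case: HJ => _ [_]; apply.
by apply: eq_bigr => k _; rewrite mulrCA.
Qed.

Lemma ideal_mul_sub I J X : is_ideal X -> (forall r s, I r -> J s -> X (r * s)) ->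
  forall x, ideal_mul I J x -> X x.
Proof.
move=> HX H x [n [a [b [Hab ->]]]]; apply: ideal_sum => // k.
by case: (Hab k) => *; apply: H.
Qed.

Lemma ideal_mul1 I J r s : I r -> J s -> ideal_mul I J (r * s).
Proof. by move=> Ir Js; apply: (@sumform1 (fun r s => I r /\ J s)). Qed.


Lemma gen_ideal1 (S : D -> Prop) y : S y -> gen_ideal S y.
Proof. by move=> Sy; rewrite -[y]mul1r; apply: (@sumform1 (fun _ s => S s)). Qed.

Lemma noeth_max (HN : noetherian D) (S : (D -> Prop) -> Prop) :
  (forall J, S J -> is_ideal J) -> (exists J, S J) ->
  exists J, S J /\ forall J', S J' -> (forall x, J x -> J' x) -> forall x, J' x -> J x.
Proof.
move=> Hid [J0 HJ0].
apply: NNPP => Hno.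
have Hnext : forall J, S J -> exists J', S J' /\ (forall x, J x -> J' x) /\ exists x, J' x /\ ~ J x.
  move=> J HJ; apply: NNPP => H1; apply: Hno; exists J; split=> // J' HJ' HJJ' x HJ'x.
  apply: NNPP => Hx; apply: H1; exists J'; split=> //; split=> //; exists x; split=> //.
pose nxt := fun J : D -> Prop => epsilon (inhabits J)
   (fun J' => S J' /\ (forall x, J x -> J' x) /\ exists x, J' x /\ ~ J x).
pose c := fun k => iter k nxt J0.
have Hc0 : forall k, S (c k).
  elim => [|k IH] //; exact: (proj1 (epsilon_spec (inhabits (c k)) _ (Hnext _ IH))).
have Hc : forall k, S (c k) /\ (forall x, c k x -> c k.+1 x) /\ exists x, c k.+1 x /\ ~ c k x.
  by move=> k; split; [exact: Hc0 | exact: (proj2 (epsilon_spec (inhabits (c k)) _ (Hnext _ (Hc0 k))))].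
have Hmono : forall k l, (k <= l)%N -> forall x, c k x -> c l x.
  move=> k; elim => [|l IH]; first by rewrite leqn0 => /eqP ->.
  rewrite leq_eqVlt => /orP [/eqP -> //| Hl] x Hx.
  by case: (Hc l) => _ [H _]; apply/H/IH.
pose U x := exists k, c k x.
have HU : is_ideal U.
  split; first by exists 0%N; case: (Hid _ (proj1 (Hc 0%N))).
  split.
    move=> x y [k Hk] [l Hl]; exists (maxn k l).
    case: (Hid _ (proj1 (Hc (maxn k l)))) => _ [HD _]; apply: HD.
      by apply: Hmono Hk; rewrite leq_maxl.
    by apply: Hmono Hl; rewrite leq_maxr.
  move=> r x [k Hk]; exists k; case: (Hid _ (proj1 (Hc k))) => _ [_ HM]; exact: HM.
have [s Hs] := HN U HU.
have [N HN'] : exists N, forall y, y \in s -> c N y.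
  have : forall y, y \in s -> U y by move=> y ys; apply/Hs/gen_ideal1.
  elim: s {Hs} => [|y s IH] Hs; first by exists 0%N.
  have [k Hk] : U y by apply: Hs; rewrite inE eqxx.
  have [N' HN'] : exists N, forall y, y \in s -> c N y.
    by apply: IH => x xs; apply: Hs; rewrite inE xs orbT.
  exists (maxn k N') => z; rewrite inE => /orP [/eqP -> | zs].
    by apply: Hmono Hk; rewrite leq_maxl.
  by apply: Hmono (HN' _ zs); rewrite leq_maxr.
case: (Hc N) => HSN [_ [x [Hx1 Hx2]]]; apply: Hx2.
have : U x by exists N.+1.
move/Hs => [n [r [s' [Hs' ->]]]]; apply: ideal_sum; first exact: Hid.
move=> k; case: (Hid _ HSN) => _ [_ HM]; exact/HM/HN'/Hs'.
Qed.


Fixpoint prodI (L : seq (D -> Prop)) : D -> Prop :=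
  if L is Q :: L' then ideal_mul Q (prodI L') else fun _ => True.

Lemma True_ideal : is_ideal (fun _ : D => True).
Proof. by []. Qed.

Lemma prodI_ideal L : is_ideal (prodI L).
Proof. by elim: L => [|Q L IH] /=; [exact: True_ideal | apply: ideal_mul_ideal]. Qed.

Lemma prodI_split L1 L2 Q p y : Q p -> prodI (L1 ++ L2) y -> prodI (L1 ++ Q :: L2) (p * y).
Proof.
move=> Qp; elim: L1 y => [|A L1 IH] y /=; first exact: ideal_mul1.
move=> [n [r [s [H ->]]]]; rewrite big_distrr /=.
exists n, r, (fun k => p * s k); split.
  by move=> k; case: (H k) => H1 H2; split => //; apply: IH.
by apply: eq_bigr => k _; rewrite mulrCA.
Qed.

Lemma prodI_app_sub L1 L2 X : is_ideal X ->
  (forall u v, prodI L1 u -> prodI L2 v -> X (u * v)) -> forall z, prodI (L1 ++ L2) z -> X z.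
Proof.
elim: L1 X => [|A L1 IH] X HX H z /=.
  by move=> Hz; have := H 1 z I Hz; rewrite mul1r.
apply: ideal_mul_sub => // r s Ar Hs.
pose X' := fun w => forall r, A r -> X (r * w).
have HX' : is_ideal X'.
  case: HX => [X0 [XD XM]]; split; first by move=> q _; rewrite mulr0.
  split; first by move=> x y Hx Hy q Aq; rewrite mulrDr; apply: XD; [apply: Hx | apply: Hy].
  by move=> q x Hx q' Aq'; rewrite mulrCA; apply: XM; apply: Hx.
apply: (IH X' HX') => // u v Hu Hv q Aq; rewrite mulrA; apply: H => //.
exact: ideal_mul1.
Qed.

Lemma prime_prodI P L : is_prime_ideal P -> (forall x, prodI L x -> P x) ->
  exists L1 Q L2, L = L1 ++ Q :: L2 /\ forall x, Q x -> P x.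
Proof.
move=> HP; elim: L => [|A L IH] H.
  by case: HP => _ [P1 _]; case: (P1 (H 1 I)).
case: (classic (forall x, A x -> P x)) => HA; first by exists [::], A, L.
have [a [Aa Pa]] : exists a, A a /\ ~ P a.
  apply: NNPP => Hn; apply: HA => x Ax; apply: NNPP => Px; apply: Hn; by exists x.
have [|L1 [Q [L2 [-> HQ]]]] := IH.
  move=> y Hy; have := H _ (ideal_mul1 Aa Hy); case: HP => _ [_ Hpr].
  by move/Hpr => [].
by exists (A :: L1), Q, L2.
Qed.


Lemma tof_inj : injective (@tof D).
Proof. by move=> a b /eqP; rewrite /tof tofrac_eq => /eqP. Qed.
Lemma tofM a b : tof (a * b) = tof a * tof b :> K.
Proof. by rewrite /tof rmorphM. Qed.
Lemma tofD a b : tof (a + b) = tof a + tof b :> K.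
Proof. by rewrite /tof rmorphD. Qed.
Lemma tof1 : tof 1 = 1 :> K.
Proof. by rewrite /tof rmorph1. Qed.
Lemma tof0 : tof 0 = 0 :> K.
Proof. by rewrite /tof rmorph0. Qed.
Lemma tof_eq0 a : (tof a == 0 :> K) = (a == 0).
Proof. by rewrite /tof tofrac_eq0. Qed.

Definition addI J (a : D) : D -> Prop := fun x => exists j d, J j /\ x = j + a * d.

Lemma addI_ideal J a : is_ideal J -> is_ideal (addI J a).
Proof.
case=> [J0 [JD JM]]; split; first by exists 0, 0; rewrite mulr0 addr0.
split.
  move=> x y [j1 [d1 [H1 ->]]] [j2 [d2 [H2 ->]]]; exists (j1 + j2), (d1 + d2).
  by split; [apply: JD | rewrite mulrDr addrACA].
move=> r x [j [d [H ->]]]; exists (r * j), (r * d); split; first exact: JM.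
by rewrite mulrDr mulrCA.
Qed.

Lemma addI_sub J a x : is_ideal J -> J x -> addI J a x.
Proof. by move=> _ Jx; exists x, 0; rewrite mulr0 addr0. Qed.

Lemma addI_a J a : is_ideal J -> addI J a a.
Proof. by case=> J0 _; exists 0, 1; rewrite mulr1 add0r. Qed.

Lemma max_prime P : is_maximal_ideal P -> is_prime_ideal P.
Proof.
move=> [HPi [P1 Hmax]]; split => //; split => // a b Pab.
case: (classic (P a)) => Pa; [by left | right].
have HM := addI_ideal a HPi.
case: (Hmax _ HM (fun x => addI_sub a HPi)) => [H1 | H2]; last first.
  by case: Pa; apply/H2/addI_a.
have [j [d [Pj E]]] := H1 1.
case: HPi => [P0 [PD PM]].
have -> : b = b * (j + a * d) by rewrite -E mulr1.
rewrite mulrDr mulrA [b * a]mulrC; apply: PD; first exact: PM.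
by rewrite [_ * d]mulrC; apply: PM.
Qed.


Definition nzprime Q := is_prime_ideal Q /\ exists x, Q x /\ x != 0.

Fixpoint allL (p : (D -> Prop) -> Prop) (L : seq (D -> Prop)) : Prop :=
  if L is Q :: L' then p Q /\ allL p L' else True.

Lemma allL_cat p L1 L2 : allL p (L1 ++ L2) <-> allL p L1 /\ allL p L2.
Proof. by elim: L1 => [|A L1 IH] /=; [tauto | rewrite IH; tauto]. Qed.

Lemma primes_contain (HN : noetherian D) J : is_ideal J -> (exists x, J x /\ x != 0) ->
  exists L, allL nzprime L /\ forall x, prodI L x -> J x.
Proof.
move=> HJ HJnz; apply: NNPP => Hno.
have [M [[HM [HMnz HMno]] Hmax]] := noeth_max HN
  (S := fun J => is_ideal J /\ (exists x, J x /\ x != 0) /\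
         ~ exists L, allL nzprime L /\ forall x, prodI L x -> J x)
  (fun J H => proj1 H) (ex_intro _ J (conj HJ (conj HJnz Hno))).
case: (classic (M 1)) => M1.
  apply: HMno; exists [::]; split=> // x _; rewrite -[x]mulr1.
  by case: HM => _ [_ HMM]; exact: HMM.
case: (classic (forall a b, M (a * b) -> M a \/ M b)) => Mpr.
  apply: HMno; exists [:: M]; split; first by split.
  by move=> x /=; apply: ideal_mul_sub => // r s Mr _; apply: ideal_mulr.
have [a [b [Mab [Ma Mb]]]] : exists a b, M (a * b) /\ ~ M a /\ ~ M b.
  apply: NNPP => Hn; apply: Mpr => a b Mab; apply: NNPP => Hn2; apply: Hn.
  by exists a, b; split => //; split => H; apply: Hn2; [left | right].
have ext : forall c, ~ M c -> exists L, allL nzprime L /\ forall x, prodI L x -> addI M c x.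
  move=> c Mc; apply: NNPP => Hn.
  have Hs : (fun x => addI M c x) = addI M c by [].
  have := Hmax (addI M c) (conj (addI_ideal c HM) (conj _ Hn)).
  case: HMnz => x [Mx x0].
  move=> /(_ (ex_intro _ x (conj (addI_sub c HM Mx) x0)) (fun y => addI_sub c HM)).
  by move=> /(_ c (addI_a c HM)).
have [La [HLa HLaM]] := ext a Ma.
have [Lb [HLb HLbM]] := ext b Mb.
apply: HMno; exists (La ++ Lb); split; first by apply/allL_cat.
apply: prodI_app_sub => // u v /HLaM [j1 [d1 [Hj1 ->]]] /HLbM [j2 [d2 [Hj2 ->]]].
case: HM => [M0 [MD MM]].
rewrite mulrDl; apply: (MD); first by rewrite mulrC; apply: (MM).
rewrite mulrDr; apply: (MD); first by apply: (MM).
by rewrite mulrACA; rewrite mulrC; apply: (MM).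
Qed.

Lemma gen_sub (S X : D -> Prop) z : is_ideal X -> (forall y, S y -> X y) -> gen_ideal S z -> X z.
Proof.
move=> HX HS [n [r [s [Hs ->]]]]; apply: ideal_sum => // k.
by case: HX => _ [_ HM]; apply/HM/HS.
Qed.

Lemma int_pow (HN : noetherian D) (HIC : integrally_closed D) (t : K) (a : D) : a != 0 ->
  (forall k, exists d, t ^+ k * tof a = tof d) -> exists d, t = tof d.
Proof.
move=> a0 Hk.
pose JN N (z : D) := exists q : {poly D}, (size q <= N)%N /\ tof z = (map_poly (@tof D) q).[t] * tof a.
have JN_ideal : forall N, is_ideal (JN N).
  move=> N; split.
    by exists 0; rewrite size_poly0 rmorph0 rmorph0 horner0 mul0r.
  split.
    move=> x y [q1 [s1 E1]] [q2 [s2 E2]]; exists (q1 + q2); split.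
      by apply: leq_trans (size_add _ _) _; rewrite geq_max s1 s2.
    by rewrite !rmorphD /= hornerD mulrDl E1 E2.
  move=> r x [q [sq E]]; exists (r *: q); split.
    exact: leq_trans (size_scale_leq _ _) sq.
  by rewrite rmorphM /= map_polyZ /= hornerZ E mulrA.
pose J (z : D) := exists q : {poly D}, tof z = (map_poly (@tof D) q).[t] * tof a.
have J_ideal : is_ideal J.
  split; first by exists 0; rewrite rmorph0 rmorph0 horner0 mul0r.
  split.
    by move=> x y [q1 E1] [q2 E2]; exists (q1 + q2); rewrite !rmorphD /= hornerD mulrDl E1 E2.
  by move=> r x [q E]; exists (r *: q); rewrite rmorphM /= map_polyZ /= hornerZ E mulrA.
have [s Hs] := HN J J_ideal.
have [N HN'] : exists N, forall y, y \in s -> JN N y.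
  have : forall y, y \in s -> J y by move=> y ys; apply/Hs/gen_ideal1.
  elim: s {Hs} => [|y s IH] Hs; first by exists 0%N.
  have [q Hq] : J y by apply: Hs; rewrite inE eqxx.
  have [N' HN'] : exists N, forall y, y \in s -> JN N y.
    by apply: IH => x xs; apply: Hs; rewrite inE xs orbT.
  exists (maxn (size q) N') => z; rewrite inE => /orP [/eqP -> | zs].
    by exists q; rewrite leq_maxl.
  have [q' [sq' E']] := HN' _ zs; exists q'; split => //.
  by apply: leq_trans sq' _; rewrite leq_maxr.
have [dN EN] := Hk N.
have JdN : J dN by exists 'X^N; rewrite map_polyXn hornerXn EN.
have [q [sq Eq]] : JN N dN.
  by move/Hs: JdN; apply: gen_sub => // y /HN'.
apply: HIC; exists ('X^N - q); split.
  rewrite monicE lead_coefDl ?lead_coefXn // size_polyXn size_opp ltnS //.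
rewrite /root rmorphB /= map_polyXn hornerD hornerN hornerXn subr_eq0.
apply/eqP; apply: (@mulIf _ (tof a)); first by rewrite tof_eq0.
by rewrite EN Eq.
Qed.

Lemma exists_t (HD : dedekind D) P : is_maximal_ideal P -> (exists x, P x /\ x != 0) ->
  exists t : K, (~ exists d, t = tof d) /\ forall p, P p -> exists d, t * tof p = tof d.
Proof.
move=> HP [x [Px x0]]; case: HD => [HN [HIC Hpm]].
have HPp := max_prime HP.
have [HPi [P1 Hmax]] := HP.
pose X := fun z => exists r, z = r * x.
have HX : is_ideal X.
  split; first by exists 0; rewrite mul0r.
  split; first by move=> y z [r1 ->] [r2 ->]; exists (r1 + r2); rewrite mulrDl.
  by move=> r y [r1 ->]; exists (r * r1); rewrite mulrA.
have XP : forall z, X z -> P z.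
  by move=> z [r ->]; case: HPi => _ [_ HM]; apply: HM.
have [L0 [HL0 HL0X]] := primes_contain HN HX (ex_intro _ x (conj (ex_intro _ 1 (esym (mul1r x))) x0)).
suff main : forall n L, size L = n -> allL nzprime L -> (forall z, prodI L z -> X z) ->
  exists t : K, (~ exists d, t = tof d) /\ forall p, P p -> exists d, t * tof p = tof d.
  exact: main _ _ erefl HL0 HL0X.
elim/ltn_ind => n IH L HsL HL HLX.
have [L1 [Q [L2 [HLe HQP]]]] := prime_prodI HPp (fun z Hz => XP z (HLX z Hz)).
move: HL; rewrite HLe => /allL_cat [HL1 /= [HQ HL2]].
have HQm := Hpm Q (proj1 HQ) (proj2 HQ).
have HPQ : forall p, P p -> Q p.
  case: HQm => [_ [_ Hmq]]; case: (Hmq P HPi HQP) => [Hall | Heq].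
    by case: P1; apply: Hall.
  by move=> p /Heq.
case: (classic (forall z, prodI (L1 ++ L2) z -> X z)) => H.
  apply: (IH (size (L1 ++ L2))) _ (L1 ++ L2) erefl _ H.
    by rewrite -HsL HLe !size_cat /= addnS ltnSn.
  by apply/allL_cat.
have [y [Hy Xy]] : exists y, prodI (L1 ++ L2) y /\ ~ X y.
  apply: NNPP => Hn; apply: H => z Hz; apply: NNPP => Xz; apply: Hn; by exists z.
have tx0 : tof x != 0 :> K by rewrite tof_eq0.
exists (tof y / tof x); split.
  move=> [d Hd]; apply: Xy; exists d; apply: tof_inj.
  by rewrite rmorphM /= -Hd divfK.
move=> p Pp.
have : X (p * y) by apply: HLX; rewrite HLe; apply: prodI_split => //; apply: HPQ.
move=> [r Er]; exists r.
apply: (mulIf tx0); rewrite -[RHS]rmorphM /= -Er rmorphM /= mulrAC divfK //.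
by rewrite mulrC.
Qed.


Lemma t_data (HD : dedekind D) P : is_maximal_ideal P -> (exists x, P x /\ x != 0) ->
  exists t : K, (~ exists d, t = tof d) /\ (forall p, P p -> exists d, t * tof p = tof d) /\
    exists p0 p1 d1, P p0 /\ P p1 /\ t * tof p1 = tof d1 /\ 1 = p0 + d1.
Proof.
move=> HP Hnz; have [t [tnD tD]] := exists_t HD HP Hnz.
exists t; split => //; split => //.
have [HPi [P1 Hmax]] := HP.
have [P0 [PD PM]] := HPi.
pose M z := exists p0 p1 d1, P p0 /\ P p1 /\ t * tof p1 = tof d1 /\ z = p0 + d1.
have HM : is_ideal M.
  split; first by exists 0, 0, 0; rewrite !rmorph0 mulr0 addr0.
  split.
    move=> x y [a0 [a1 [b1 [Ha0 [Ha1 [Eb ->]]]]]] [c0 [c1 [e1 [Hc0 [Hc1 [Ee ->]]]]]].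
    exists (a0 + c0), (a1 + c1), (b1 + e1); split; first exact: PD.
    split; first exact: PD.
    by rewrite !rmorphD /= mulrDr Eb Ee; split => //; rewrite addrACA.
  move=> r x [a0 [a1 [b1 [Ha0 [Ha1 [Eb ->]]]]]].
  exists (r * a0), (r * a1), (r * b1); split; first exact: PM.
  split; first exact: PM.
  by rewrite !rmorphM /= mulrCA Eb; split => //; rewrite mulrDr.
have PsubM : forall x, P x -> M x.
  by move=> x Px; exists x, 0, 0; rewrite !rmorph0 mulr0 addr0.
case: (Hmax M HM PsubM) => [Hall | Heq].
  by have [a0 [a1 [b1 [Ha0 [Ha1 [Eb E]]]]]] := Hall 1; exists a0, a1, b1.
exfalso; apply: tnD.
have tPP : forall p d, P p -> t * tof p = tof d -> P d.
  by move=> p d Pp Ed; apply/Heq; exists 0, p, d; rewrite add0r.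
case: HD => [HN [HIC _]].
case: Hnz => x [Px x0].
apply: (int_pow HN HIC x0) => k.
suff : exists d, P d /\ t ^+ k * tof x = tof d by case=> d [_ ?]; exists d.
elim: k => [|k [d [Pd Ed]]]; first by exists x; rewrite expr0 mul1r.
have [d' Ed'] := tD d Pd.
exists d'; split; first exact: tPP Ed'.
by rewrite exprS -mulrA Ed.
Qed.

Section Pow.
Variable P : D -> Prop.
Hypothesis HP : is_maximal_ideal P.
Local Notation Pn := (ideal_pow P).

Lemma pow_ideal n : is_ideal (Pn n).
Proof. by elim: n => [|n IH] /=; [exact: True_ideal | apply: ideal_mul_ideal]. Qed.

Lemma pow_dec n x : Pn n.+1 x -> Pn n x.
Proof.
apply: ideal_mul_sub; first exact: pow_ideal.
by move=> r s _ Hs; case: (pow_ideal n) => _ [_ HM]; apply: HM.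
Qed.

Lemma pow_mono n m x : (n <= m)%N -> Pn m x -> Pn n x.
Proof.
move=> nm; elim: m nm => [|m IH]; first by rewrite leqn0 => /eqP ->.
rewrite leq_eqVlt => /orP [/eqP -> //| Hl] Hx.
by apply: IH => //; apply: pow_dec.
Qed.

Lemma pow1 x : Pn 1 x <-> P x.
Proof.
have [HPi _] := HP.
split; first by apply: ideal_mul_sub => // r s Pr _; apply: ideal_mulr.
by move=> Px; rewrite -[x]mulr1; apply: ideal_mul1.
Qed.

Lemma pow_mul n m a b : Pn n a -> Pn m b -> Pn (n + m) (a * b).
Proof.
elim: n a => [|n IH] a /=.
  by move=> _ Hb; rewrite add0n; case: (pow_ideal m) => _ [_ HM]; apply: HM.
move=> [k [r [s [H ->]]]] Hb; rewrite big_distrl /=.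
exists k, r, (fun i => s i * b); split; last by apply: eq_bigr => i _; rewrite mulrA.
by move=> i; case: (H i) => Hr Hs; split => //; apply: IH.
Qed.

Variable t : K.
Hypothesis tD : forall p, P p -> exists d, t * tof p = tof d.
Variables p0 p1 d1 : D.
Hypotheses (Pp0 : P p0) (Pp1 : P p1) (Ed1 : t * tof p1 = tof d1) (E1 : 1 = p0 + d1).

Lemma T1 n a : Pn n.+1 a -> exists a', tof a' = t * tof a /\ Pn n a'.
Proof.
move=> [k [r [s [H ->]]]].
have [df Hdf] : exists df : 'I_k -> D, forall i, t * tof (r i) = tof (df i).
  by apply: (@fin_all_exists _ (fun _ => D) (fun i d => t * tof (r i) = tof d)) => i; apply: tD; case: (H i).
exists (\sum_(i < k) df i * s i); split.
  rewrite !rmorph_sum mulr_sumr; apply: eq_bigr => i _.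
  by rewrite !rmorphM /= -Hdf mulrA.
apply: (@ideal_sum (Pn n)); first exact: pow_ideal.
by move=> i; case: (pow_ideal n) => _ [_ HM]; apply: HM; case: (H i).
Qed.

Lemma T2 n a a' : Pn n a -> tof a' = t * tof a -> Pn n a' -> Pn n.+1 a.
Proof.
move=> Ha Ea Ha'.
have Ead : a * d1 = a' * p1.
  by apply: tof_inj; rewrite !rmorphM /= -Ed1 Ea mulrA [tof a * t]mulrC.
have -> : a = p0 * a + p1 * a'.
  by rewrite -{1}[a]mulr1 E1 mulrDr Ead [a * p0]mulrC [a' * p1]mulrC.
case: (pow_ideal n.+1) => _ [HD _]; apply: HD; exact: ideal_mul1.
Qed.

Hypothesis tnD : ~ exists d, t = tof d.
Hypotheses (HN : noetherian D) (HIC : integrally_closed D).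

Lemma krull a : a != 0 -> exists n, ~ Pn n a.
Proof.
move=> a0; apply: NNPP => Hn.
have H : forall n, Pn n a by move=> n; apply: NNPP => Hna; apply: Hn; exists n.
apply: tnD; apply: (int_pow HN HIC a0) => k.
suff : forall n, exists d, Pn n d /\ t ^+ k * tof a = tof d by case/(_ 0%N) => d [_ ?]; exists d.
elim: k => [|k IH] n; first by exists a; rewrite expr0 mul1r.
have [d [Hd Ed]] := IH n.+1.
have [d' [Ed' Hd']] := T1 Hd.
by exists d'; split => //; rewrite Ed' -Ed exprS mulrA.
Qed.

Lemma ord_spec a : a != 0 -> Pn (ordP P a) a /\ ~ Pn (ordP P a).+1 a.
Proof.
move=> a0; rewrite /ordP; apply: (epsilon_spec (inhabits 0%N) (fun n => Pn n a /\ ~ Pn n.+1 a)).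
have [n Hn] := krull a0.
elim: n Hn => [|n IH] Hn; first by case: Hn.
case: (classic (Pn n a)) => Hna; first by exists n.
exact: IH.
Qed.

Lemma ord_uniq a n : Pn n a -> ~ Pn n.+1 a -> ordP P a = n.
Proof.
move=> H1 H2.
have a0 : a != 0.
  by apply/eqP => a0; apply: H2; rewrite a0; case: (pow_ideal n.+1).
have [H3 H4] := ord_spec a0.
case: (ltngtP (ordP P a) n) => // Hlt.
  by case: H4; apply: pow_mono H1.
by case: H2; apply: pow_mono H3.
Qed.

Lemma ord_ge a e : a != 0 -> Pn e a -> (e <= ordP P a)%N.
Proof.
move=> a0 He; have [_ H] := ord_spec a0.
rewrite leqNgt; apply/negP => Hlt; apply: H; exact: pow_mono He.
Qed.

Lemma ord_0 a : ~ P a -> ordP P a = 0%N.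
Proof. by move=> Pa; apply: ord_uniq => //; rewrite pow1. Qed.

Lemma mulnot_step n m :
  (forall a b, Pn n a -> ~ Pn n.+1 a -> Pn m b -> ~ Pn m.+1 b -> ~ Pn (n + m).+1 (a * b)) ->
  (forall a b, Pn n.+1 a -> ~ Pn n.+2 a -> Pn m b -> ~ Pn m.+1 b -> ~ Pn (n.+1 + m).+1 (a * b)).
Proof.
move=> IH a b Ha Na Hb Nb Hab.
have [a' [Ea' Ha']] := T1 Ha.
have Na' : ~ Pn n.+1 a' by move=> H; apply: Na; apply: T2 Ea' H.
have [w [Ew Hw]] := T1 Hab.
have Ew' : w = a' * b by apply: tof_inj; rewrite Ew !rmorphM /= Ea' mulrA.
by apply: (IH a' b) => //; rewrite -Ew' -addSn.
Qed.

Lemma mulnot n m a b : Pn n a -> ~ Pn n.+1 a -> Pn m b -> ~ Pn m.+1 b -> ~ Pn (n + m).+1 (a * b).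
Proof.
elim: n m a b => [|n IHn] m; last by apply: mulnot_step; apply: IHn.
elim: m => [|m IHm] a b.
  move=> _ Na _ Nb; rewrite !pow1 => Pab; have [_ [_ Hpr]] := max_prime HP.
  by case: (Hpr _ _ Pab) => H; [apply: Na | apply: Nb]; rewrite pow1.
move=> Ha Na Hb Nb; rewrite mulrC add0n.
have IH' : forall a' b', Pn m a' -> ~ Pn m.+1 a' -> Pn 0 b' -> ~ Pn 1 b' ->
    ~ Pn (m + 0).+1 (a' * b').
  by move=> a' b' H1 H2 H3 H4; have := IHm b' a' H3 H4 H1 H2; rewrite add0n addn0 mulrC.
by have := mulnot_step IH' Hb Nb Ha Na; rewrite addn0.
Qed.

Lemma ord_mul a b : a != 0 -> b != 0 -> ordP P (a * b) = (ordP P a + ordP P b)%N.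
Proof.
move=> a0 b0; have [Ha Na] := ord_spec a0; have [Hb Nb] := ord_spec b0.
apply: ord_uniq; first exact: pow_mul.
exact: mulnot.
Qed.

Lemma gen_small z n (r s : 'I_n -> D) : z != 0 -> z = \sum_(k < n) r k * s k ->
  exists k, s k != 0 /\ (ordP P (s k) <= ordP P z)%N.
Proof.
move=> z0 Ez; apply: NNPP => Hn.
have [_ Nz] := ord_spec z0; set o := ordP P z in Hn Nz *; apply: Nz; rewrite Ez.
apply: ideal_sum; first exact: pow_ideal.
move=> k; case: (pow_ideal o.+1) => P0 [_ PM]; apply: PM.
case: (eqVneq (s k) 0) => [-> //| sk0].
have [Hs _] := ord_spec sk0; apply: pow_mono Hs.
rewrite ltnNge; apply/negP => Hle; apply: Hn; exists k; split => //.
Qed.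

End Pow.


Lemma frac_rep (x : K) : exists a b : D, b != 0 /\ x = tof a / tof b.
Proof.
elim/quotW: x => r. exists (r.1), (r.2). split; first exact: denom_ratioP.
apply: (@mulIf _ (tof r.2)); first by rewrite /tof tofrac_eq0 denom_ratioP.
rewrite divfK; last by rewrite /tof tofrac_eq0 denom_ratioP.
rewrite /tof /FracField.tofrac; unlock.
change (FracField.mul (\pi_({fraction D})%qT r) (\pi_({fraction D})%qT (Ratio r.2 1))
  = \pi_({fraction D})%qT (Ratio r.1 1)).
rewrite -FracField.pi_mul. apply/eqmodP. rewrite /= FracField.equivfE.
rewrite /FracField.mulf !numer_Ratio ?denom_Ratio ?mulr1 ?oner_neq0 ?mulf_neq0 ?denom_ratioP ?oner_neq0 //.
by rewrite mulrC.
Qed.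

Section V.
Variable P : D -> Prop.
Hypothesis ordM : forall a b, a != 0 -> b != 0 -> ordP P (a * b) = (ordP P a + ordP P b)%N.

Lemma ord1 : ordP P 1 = 0%N.
Proof. by have := ordM (oner_neq0 D) (oner_neq0 D); rewrite mulr1 => /eqP; rewrite -{1}[ordP P 1]addn0 eqn_add2l eq_sym => /eqP. Qed.

Lemma vP_rep x a b : a != 0 -> b != 0 -> x = tof a / tof b ->
  vP P x = (ordP P a)%:Z - (ordP P b)%:Z.
Proof.
move=> a0 b0 Ex; rewrite /vP.
have := epsilon_spec (inhabits 0%Z) (fun z => exists a b : D, b != 0 /\ x = tof a / tof b /\
   z = (ordP P a)%:Z - (ordP P b)%:Z) (ex_intro _ _ (ex_intro _ a (ex_intro _ b (conj b0 (conj Ex erefl))))).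
move=> [a' [b' [b0' [Ex' ->]]]].
have tb0 : tof b != 0 :> K by rewrite tof_eq0.
have tb0' : tof b' != 0 :> K by rewrite tof_eq0.
have E : a * b' = a' * b.
  apply: tof_inj; rewrite !rmorphM /=.
  have : tof a / tof b = tof a' / tof b' :> K by rewrite -Ex -Ex'.
  move/(congr1 (fun z => z * tof b * tof b')).
  by rewrite divfK // -mulrA [tof b * _]mulrC mulrA divfK // => ->.
have a0' : a' != 0.
  apply/eqP => a0'; move: E; rewrite a0' mul0r => /eqP; rewrite mulf_eq0 (negbTE a0) (negbTE b0').
  by [].
have := ordM a0 b0'; rewrite E ordM //; lia.
Qed.

Lemma vP_mul x y : x != 0 -> y != 0 -> vP P (x * y) = vP P x + vP P y.
Proof.
have [a [b [b0 ->]]] := frac_rep x; have [c [d [d0 ->]]] := frac_rep y.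
move=> x0 y0.
have a0 : a != 0 by apply: contraNneq x0 => ->; rewrite rmorph0 mul0r.
have c0 : c != 0 by apply: contraNneq y0 => ->; rewrite rmorph0 mul0r.
rewrite (vP_rep a0 b0 erefl) (vP_rep c0 d0 erefl).
rewrite (@vP_rep _ (a * c) (b * d)) ?mulf_neq0 //; last first.
  by rewrite !rmorphM /= invfM mulrACA.
rewrite !ordM //; lia.
Qed.

Lemma vP_inv c : c != 0 -> vP P (tof c)^-1 = - (ordP P c)%:Z.
Proof.
move=> c0; rewrite (@vP_rep _ 1 c) ?oner_neq0 // ?ord1; last by rewrite rmorph1 mul1r.
by rewrite sub0r.
Qed.

Lemma vP_prod n (F : 'I_n -> K) : (forall j, F j != 0) ->
  vP P (\prod_(j < n) F j) = \sum_(j < n) vP P (F j).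
Proof.
move=> HF.
suff : \prod_(j < n) F j != 0 /\ vP P (\prod_(j < n) F j) = \sum_(j < n) vP P (F j) by case.
apply: (big_rec2 (fun (y : int) (x : K) => x != 0 /\ vP P x = y)).
  split; first exact: oner_neq0.
  by rewrite (@vP_rep _ 1 1) ?oner_neq0 ?ord1 ?subrr // rmorph1 divr1.
move=> j v x _ [x0 Ex]; split; first by rewrite mulf_neq0.
by rewrite vP_mul // Ex.
Qed.

Lemma ord_prod n (F : 'I_n -> D) : (forall j, F j != 0) ->
  (ordP P (\prod_(j < n) F j))%:Z = \sum_(j < n) (ordP P (F j))%:Z.
Proof.
move=> HF.
suff : \prod_(j < n) F j != 0 /\ (ordP P (\prod_(j < n) F j))%:Z = \sum_(j < n) (ordP P (F j))%:Z by case.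
apply: (big_rec2 (fun (y : int) (x : D) => x != 0 /\ (ordP P x)%:Z = y)).
  by split; [exact: oner_neq0 | rewrite ord1].
move=> j v x _ [x0 Ex]; split; first by rewrite mulf_neq0.
by rewrite ordM // PoszD Ex.
Qed.

End V.

End Alg.

Section PolyF.
Variable F : fieldType.

Lemma irred_prime (p q r : {poly F}) : irreducible_poly p -> p %| q * r -> (p %| q) || (p %| r).
Proof.
move=> Hp Hd; case Hc: (coprimep p q).
  by rewrite Gauss_dvdpr // in Hd; rewrite Hd orbT.
have Hg : gcdp p q %= p.
  by apply: Hp; [rewrite -coprimep_def Hc | exact: dvdp_gcdl].
by rewrite -(eqp_dvdl _ Hg) dvdp_gcdr.
Qed.

Lemma irred_prod (p : {poly F}) m (g : 'I_m -> {poly F}) : irreducible_poly p ->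
  p %| \prod_(j < m) g j -> exists j, p %| g j.
Proof.
move=> Hp; elim: m g => [|m IH] g.
  rewrite big_ord0 dvdp1 => /eqP Hs; by case: Hp; rewrite Hs.
rewrite big_ord_recr /= => /(irred_prime Hp) /orP [H | H].
  by have [j Hj] := IH _ H; exists (widen_ord (leqnSn m) j).
by exists ord_max.
Qed.

Variable I : finType.
Variable Fi : I -> {poly F}.
Hypothesis Hirr : forall i, irreducible_poly (Fi i).

Lemma poly_partition m (j0 : 'I_m) n (S : {set I}) (g : 'I_m -> {poly F}) (u : F) :
  #|S| = n -> u != 0 -> \prod_(j < m) g j = u *: \prod_(i in S) Fi i ->
  exists (s : I -> 'I_m) (a : 'I_m -> F), forall j, g j = a j *: \prod_(i in S | s i == j) Fi i.
Proof.
elim: n S g u => [|n IH] S g u HS u0 Hprod.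
  move/eqP: HS; rewrite cards_eq0 => /eqP HS0.
  exists (fun _ => j0), (fun j => (g j)`_0) => j.
  rewrite (eq_bigl xpred0) ?big_pred0 //; last by move=> i; rewrite HS0 inE.
  have Hp' : \prod_(j < m) g j = u%:P.
    rewrite Hprod HS0 (eq_bigl xpred0) ?big_pred0 ?alg_polyC // => i.
    by rewrite inE.
  have gj0 : g j != 0.
    apply/eqP => gj0; move: Hp'; rewrite (bigD1 j) //= gj0 mul0r => /esym/eqP.
    by rewrite polyC_eq0 (negbTE u0).
  have : size (g j) == 1%N.
    rewrite eqn_leq; have -> : (size (g j) <= 1)%N.
      have : g j %| u%:P by rewrite -Hp' (bigD1 j) //= dvdp_mulIl.
      move/(dvdp_leq _); rewrite size_polyC u0; apply.
      by rewrite polyC_eq0.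
    by rewrite size_poly_gt0.
  case/size_poly1P => c c0 ->; by rewrite coefC eqxx alg_polyC.
have [i0 i0S] : exists i0, i0 \in S.
  by apply/set0Pn; rewrite -card_gt0 HS.
have Hdiv : Fi i0 %| \prod_(j < m) g j.
  by rewrite Hprod dvdpZr // (bigD1 i0) //= dvdp_mulIl.
have [j /dvdpP [q Eq]] := irred_prod (Hirr i0) Hdiv.
pose g' := fun k => if k == j then q else g k.
have Fi0 : Fi i0 != 0 := irredp_neq0 (Hirr i0).
have ES : \prod_(i in S) Fi i = Fi i0 * \prod_(i in S :\ i0) Fi i.
  rewrite (bigD1 i0) //=; congr (_ * _); apply: eq_bigl => i; by rewrite in_setD1 andbC.
have Hprod' : \prod_(k < m) g' k = u *: \prod_(i in S :\ i0) Fi i.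
  apply: (mulfI Fi0); rewrite -scalerAr -ES -Hprod (bigD1 j) //= [in RHS](bigD1 j) //=.
  rewrite /g' eqxx Eq mulrA [Fi i0 * q]mulrC.
  congr (_ * _); apply: eq_bigr => k kj; by rewrite (negbTE kj).
have HS' : #|S :\ i0| = n by move: HS; rewrite (cardsD1 i0) i0S add1n => -[].
have [s' [a' Hs']] := IH (S :\ i0) g' u HS' u0 Hprod'.
exists (fun i => if i == i0 then j else s' i), a' => k.
case: (eqVneq k j) => [-> | kj].
  rewrite (bigD1 i0) /= ?eqxx ?i0S //.
  have Hq : q = g' j by rewrite /g' eqxx.
  rewrite Eq Hq Hs' -scalerAl mulrC; congr (_ *: (_ * _)).
  apply: eq_bigl => i; rewrite in_setD1; case: (eqVneq i i0) => [->|ii0] /=.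
    by rewrite andbF.
  by rewrite andbT.
have -> : g k = g' k by rewrite /g' (negbTE kj).
rewrite Hs'; congr (_ *: _); apply: eq_bigl => i; rewrite in_setD1.
case: (eqVneq i i0) => [->|ii0] /=; last by [].
by rewrite eq_sym (negbTE kj) andbF.
Qed.


End PolyF.

Unset Implicit Arguments. Set Strict Implicit. Set Printing Implicit Defensive.

Lemma intval_mul (D : idomainType) (p q : {poly {fraction D}}) :
  intval p -> intval q -> intval (p * q).
Proof.
move=> Hp Hq a; have [b Hb] := Hp a; have [b' Hb'] := Hq a.
by exists (b * b'); rewrite hornerM Hb Hb' rmorphM.
Qed.

Lemma intval_prod (D : idomainType) m (P : pred 'I_m) (g : 'I_m -> {poly {fraction D}}) :
  (forall j, intval (g j)) -> intval (\prod_(j < m | P j) g j).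
Proof.
move=> Hg; apply: big_ind => //; last by move=> x y; apply: intval_mul.
by move=> a; exists 1; rewrite -polyC1 hornerC rmorph1.
Qed.

Lemma principal_ideal (D : idomainType) (c : D) : is_ideal (principal c).
Proof.
split; first by exists 0; rewrite mul0r.
split; first by move=> x y [r1 ->] [r2 ->]; exists (r1 + r2); rewrite mulrDl.
by move=> r x [r1 ->]; exists (r * r1); rewrite mulrA.
Qed.

Theorem lemma3p4 (D : idomainType) (HD : dedekind D)
  (I : finType) (HI : (0 < #|I|)%N) (f : I -> {poly D})
  (Hirr : forall i, irreducible_poly (map_poly (@tof D) (f i)))
  (c : D) (Hc0 : c != 0) (Hcu : c \isn't a GRing.unit)
  (Hd : forall x, fixdiv (\prod_(i : I) f i) x <-> principal c x)
  (m : nat) (g : 'I_m -> {poly {fraction D}})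
  (Hg_int : forall j, intval (g j)) (Hg_nu : forall j, ~ intval_unit (g j))
  (Hfact : (tof c)^-1 *: map_poly (@tof D) (\prod_(i : I) f i) = \prod_(j < m) g j) :
  exists (Ij : 'I_m -> {set I}) (a : 'I_m -> {fraction D}),
    (forall j, Ij j != set0) /\
    (forall j, g j = a j *: \prod_(i in Ij j) map_poly (@tof D) (f i)) /\
    (forall i, exists! j, i \in Ij j) /\
    \prod_(j < m) a j = (tof c)^-1 /\
    (forall P, is_maximal_ideal P -> forall j, vP P (a j) <= 0) /\
    (forall P, is_maximal_ideal P -> ~ P c -> forall j, vP P (a j) = 0).
Proof.
pose Ft i := map_poly (@tof D) (f i).
have Fprod : map_poly (@tof D) (\prod_i f i) = \prod_i Ft i by rewrite rmorph_prod.
have tc0 : tof c != 0 :> {fraction D} by rewrite tof_eq0.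
have u0 : (tof c)^-1 != 0 :> {fraction D} by rewrite invr_eq0.
have [i0 _] := card_gt0P HI.
have Hdiv : Ft i0 %| \prod_(j < m) g j.
  by rewrite -Hfact dvdpZr // Fprod (bigD1 i0) //= dvdp_mulIl.
have [j0 _] := irred_prod (Hirr i0) Hdiv.
have Hprod : \prod_(j < m) g j = (tof c)^-1 *: \prod_(i in [set: I]) Ft i.
  by rewrite -Hfact Fprod; congr (_ *: _); apply: eq_bigl => i; rewrite inE.
have [s [a Hga]] := poly_partition Hirr j0 erefl u0 Hprod.
pose Ij j := [set i | s i == j].
have HgE : forall j, g j = a j *: \prod_(i in Ij j) Ft i.
  by move=> j; rewrite Hga; congr (_ *: _); apply: eq_bigl => i; rewrite !inE.
pose h j := \prod_(i in Ij j) f i.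
have Hh : forall j, map_poly (@tof D) (h j) = \prod_(i in Ij j) Ft i.
  by move=> j; rewrite rmorph_prod.
have Fnz : \prod_(i : I) Ft i != 0 by apply/prodf_neq0 => i _; exact: irredp_neq0 (Hirr i).
have a0 : forall j, a j != 0.
  move=> j; apply/eqP => aj0.
  have : \prod_(j < m) g j = 0 by rewrite (bigD1 j) //= HgE aj0 scale0r mul0r.
  by rewrite -Hfact Fprod => /eqP; rewrite scaler_eq0 (negbTE u0) (negbTE Fnz).
have Fsplit : \prod_(i : I) f i = \prod_(j < m) h j.
  rewrite (partition_big s xpredT) //; apply: eq_bigr => j _.
  by apply: eq_bigl => i; rewrite inE.
have Hpa : \prod_(j < m) a j = (tof c)^-1.
  have E1 : (\prod_(j < m) a j) *: \prod_(i : I) Ft i = \prod_(j < m) g j.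
    rewrite (eq_bigr _ (fun j _ => HgE j)) scaler_prod; congr (_ *: _).
    rewrite -Fprod Fsplit rmorph_prod /=; apply: eq_bigr => j _; by rewrite Hh.
  have E2 : (tof c)^-1 *: \prod_(i : I) Ft i = \prod_(j < m) g j by rewrite -Fprod Hfact.
  have E : (\prod_(j < m) a j - (tof c)^-1) *: \prod_(i : I) Ft i = 0.
    by rewrite scalerBl E1 E2 subrr.
  by move/eqP: E; rewrite scaler_eq0 (negbTE Fnz) orbF subr_eq0 => /eqP.
have Hcfix : fixdiv (\prod_i f i) c by apply/Hd; exists 1; rewrite mul1r.
have key : forall P, is_maximal_ideal P -> exists w : 'I_m -> nat,
   (forall j, vP P (a j) = - (w j)%:Z) /\ (~ P c -> forall j, w j = 0%N).
  move=> P HP.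
  have Hnz : exists x, P x /\ x != 0.
    apply: NNPP => Hn; have [HPi [P1 Hmax]] := HP.
    have HPc : forall x, P x -> principal c x.
      move=> x Px; exists 0; rewrite mul0r; apply/eqP; apply: NNPP => x0.
      by apply: Hn; exists x; split => //; apply/negP.
    case: (Hmax _ (@principal_ideal _ c) HPc) => [Hall | Heq].
      have [r Er] := Hall 1; move/negP: Hcu; apply; apply/unitrP.
      by exists r; rewrite -Er mulrC -Er.
    have Pc : P c by apply/Heq; exists 1; rewrite mul1r.
    by apply: Hn; exists c.
  have [t [tnD [tD [p0 [p1 [d1 [Pp0 [Pp1 [Ed1 E1]]]]]]]]] := t_data HD HP Hnz.
  have [HN [HIC _]] := HD.
  have ordM := ord_mul HP tD Pp0 Pp1 Ed1 E1 tnD HN HIC.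
  case: Hcfix => n [r [sx [Hsx Ec]]].
  have [k [sk0 Hk]] := gen_small tD tnD HN HIC Hc0 Ec.
  have [xs Exs] := Hsx k.
  have HF : (\prod_i f i).[xs] = \prod_(j < m) (h j).[xs] by rewrite Fsplit horner_prod.
  have hnz : forall j, (h j).[xs] != 0.
    have /prodf_neq0 H : \prod_(j < m) (h j).[xs] != 0 by rewrite -HF -Exs.
    by move=> j; apply: H.
  exists (fun j => ordP P (h j).[xs]).
  have Hv : forall j, 0 <= vP P (a j) + (ordP P (h j).[xs])%:Z.
    move=> j; have [b Eb] := Hg_int j xs.
    have Eb' : a j * tof (h j).[xs] = tof b.
      by rewrite -Eb HgE hornerZ -Hh horner_map.
    have b0 : b != 0.
      by rewrite -tof_eq0 -Eb' mulf_neq0 // tof_eq0.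
    rewrite (vP_rep ordM (a := b) (b := (h j).[xs])) //; last first.
      by rewrite -Eb' mulfK // tof_eq0.
    by rewrite subrK.
  have Hsum : \sum_(j < m) vP P (a j) = - (ordP P c)%:Z.
    by rewrite -vP_prod // Hpa vP_inv.
  have Hle : \sum_(j < m) (ordP P (h j).[xs])%:Z <= (ordP P c)%:Z.
    by rewrite -ord_prod // -HF -Exs lez_nat.
  have H0 : forall j, vP P (a j) + (ordP P (h j).[xs])%:Z = 0.
    have Hge : forall i, xpredT i -> 0 <= vP P (a i) + (ordP P (h i).[xs])%:Z.
      by move=> i _; apply: Hv.
    have Hs0 : \sum_(i < m) (vP P (a i) + (ordP P (h i).[xs])%:Z) = 0.
      apply/eqP; rewrite eq_le sumr_ge0 ?andbT; last by move=> i _; apply: Hv.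
      by rewrite big_split /= Hsum addrC subr_le0.
    by move=> j; have := psumr_eq0P Hge Hs0; apply.
  split.
    by move=> j; apply/eqP; rewrite -subr_eq0 opprK; apply/eqP; exact: H0.
  move=> Pc j; have Hc := ord_0 HP tD tnD HN HIC Pc.
  rewrite Hc in Hle.
  have Hge : forall i, xpredT i -> 0 <= (ordP P (h i).[xs])%:Z by move=> i _.
  have Hs0 : \sum_(i < m) (ordP P (h i).[xs])%:Z = 0.
    by apply/eqP; rewrite eq_le Hle sumr_ge0.
  by have := psumr_eq0P Hge Hs0 (i := j) isT; case.
exists Ij, a.
split.
  move=> j; apply/negP => /eqP Hj0.
  have [e Ee] := Hg_int j 0.
  have gjc : g j = (tof e)%:P.
    have gjc' : g j = (a j)%:P by rewrite HgE Hj0 big_set0 alg_polyC.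
    by move: Ee; rewrite gjc' hornerC => ->.
  pose R := \prod_(k < m | k != j) g k.
  have HR : intval R by apply: intval_prod.
  have Hsplit : (tof c)^-1 *: map_poly (@tof D) (\prod_i f i) = (tof e)%:P * R.
    by rewrite Hfact (bigD1 j) //= gjc.
  have Hdiv' : forall x, principal (c * e) (\prod_i f i).[x].
    move=> x; have [r Er] := HR x; exists r.
    have := congr1 (fun p => p.[tof x]) Hsplit.
    rewrite /= hornerZ horner_map hornerM hornerC Er => H.
    apply: tof_inj; rewrite !rmorphM /=; apply: (mulfI u0); rewrite H.
    by rewrite mulrCA mulKf // mulrC.
  have : principal (c * e) c.
    apply: (gen_sub (@principal_ideal _ (c * e)) _ Hcfix).
    by move=> y [x ->]; apply: Hdiv'.
  move=> [r Er].
  have Ere : e * r = 1.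
    by apply: (mulfI Hc0); rewrite mulr1; symmetry; rewrite {1}Er mulrC -mulrA.
  apply: (Hg_nu j); split => //; exists (tof r)%:P; split.
    by move=> x; exists r; rewrite hornerC.
  by rewrite gjc -polyCM -rmorphM /= Ere rmorph1.
split; first by move=> j; rewrite HgE.
split.
  by move=> i; exists (s i); split; [rewrite inE | move=> j; rewrite inE => /eqP].
split; first exact: Hpa.
split.
  by move=> P HP j; have [w [Hw _]] := key P HP; rewrite Hw oppr_le0.
by move=> P HP Pc j; have [w [Hw Hw0]] := key P HP; rewrite Hw Hw0.
Qed.
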